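(* Let $X$ be a Hausdorff space without isolated points. If \textsc{Bob} has a winning strategy in the game $\mathsf{BM}_\mathrm{fin}(X)$, then \textsc{Bob} has a winning strategy in $\mathsf{BM}_\mathrm{fin}(X)$ in which every move $\mathcal{B}_n$ of \textsc{Bob} consists of pairwise disjoint sets.
   Context: The game $\mathsf{BM}_\mathrm{fin}(X)$ on a topological space $X$ is played by \textsc{Alice} and \textsc{Bob} as follows. \textsc{Alice} plays a non-empty open set $A_0$; \textsc{Bob} plays a finite collection $\mathcal{B}_0$ of non-empty open subsets of $A_0$. In inning $n+1$, for each $B \in \mathcal{B}_n$ \textsc{Alice} plays a non-empty open set $A_B \subseteq B$; let $\mathcal{A}_{n+1}=\{A_B : B\in\mathcal{B}_n\}$; then \textsc{Bob} plays a finite collection $\mathcal{B}_{n+1}$ of non-empty open subsets of $\bigcup\mathcal{A}_{n+1}$. Put $B_n=\bigcup\mathcal{B}_n$. \textsc{Bob} wins the play if $\bigcap_{n\in\omega}B_n\neq\emptyset$; otherwise \textsc{Alice} wins. A strategy for \textsc{Bob} is a function assigning a legal move of \textsc{Bob} to each finite sequence of previous moves of \textsc{Alice}; it is winning if \textsc{Bob} wins every play in which he follows it. *)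

(* Defs.v *)
From mathcomp Require Import all_boot all_order.
From mathcomp Require Import all_classical all_reals all_analysis.
Set Implicit Arguments. Unset Strict Implicit. Unset Printing Implicit Defensive.
Local Open Scope classical_set_scope.

(* A finite collection of open sets is represented by a list; a move of Alice
   answering Bob's list [B_0; ...; B_{k-1}] is a list [A_0; ...; A_{k-1}]
   with A_i a nonempty open subset of B_i.  Alice's first move A_0 is encoded
   as the one-element list [:: A_0], answering the fictitious Bob move [:: setT]. *)

Section BMfin.
Variable T : topologicalType.

Definition unionl (s : seq (set T)) : set T :=
  [set x | exists i, (i < size s)%N /\ nth set0 s i x].

Definition alice_legal (b a : seq (set T)) : Prop :=
  size a = size b /\
  forall i, (i < size a)%N ->
    [/\ open (nth set0 a i), nth set0 a i !=set0 & nth set0 a i `<=` nth set0 b i].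

Definition bob_legal (a b : seq (set T)) : Prop :=
  forall i, (i < size b)%N ->
    [/\ open (nth set0 b i), nth set0 b i !=set0 & nth set0 b i `<=` unionl a].

(* A strategy of Bob: previous moves of Alice (A_0, ..., A_n) |-> B_n *)
Definition bob_strategy := seq (seq (set T)) -> seq (set T).

Definition history (alice : nat -> seq (set T)) (n : nat) := mkseq alice n.+1.

Definition prevB (sigma : bob_strategy) (alice : nat -> seq (set T)) (n : nat)
  : seq (set T) :=
  match n with
  | 0 => [:: setT]
  | k.+1 => sigma (history alice k)
  end.

Definition alice_legal_upto (sigma : bob_strategy) alice n :=
  forall k, (k <= n)%N -> alice_legal (prevB sigma alice k) (alice k).

Definition strategy_legal (sigma : bob_strategy) : Prop :=
  forall alice n, alice_legal_upto sigma alice n ->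
    bob_legal (alice n) (sigma (history alice n)).

Definition winning_strategy (sigma : bob_strategy) : Prop :=
  strategy_legal sigma /\
  forall alice : nat -> seq (set T),
    (forall n, alice_legal (prevB sigma alice n) (alice n)) ->
    \bigcap_(n in setT) unionl (sigma (history alice n)) !=set0.

Definition pairwise_disjoint (s : seq (set T)) : Prop :=
  forall i j, (i < j)%N -> (j < size s)%N -> nth set0 s i `&` nth set0 s j = set0.

Definition disjoint_moves (sigma : bob_strategy) : Prop :=
  forall alice n, alice_legal_upto sigma alice n ->
    pairwise_disjoint (sigma (history alice n)).

End BMfin.

Definition no_isolated_points (T : topologicalType) : Prop :=
  forall x : T, ~ open [set x].

(* Main.v *)
Require Import Defs.
From mathcomp Require Import all_boot all_order.
From mathcomp Require Import all_classical all_reals all_analysis.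
Set Implicit Arguments. Unset Strict Implicit. Unset Printing Implicit Defensive.
Local Open Scope classical_set_scope.

Section Aux.
Variable T : topologicalType.
Hypothesis hT : hausdorff_space T.
Hypothesis nI : no_isolated_points T.

Lemma pair_sep (b c : set T) : open b -> b !=set0 -> open c -> c !=set0 ->
  exists b' c', open b' /\ b' !=set0 /\ b' `<=` b /\ open c' /\ c' !=set0 /\ c' `<=` c /\
     b' `&` c' = set0.
Proof.
move=> ob [y yb] oc [z cz].
have [x [cx xy]] : exists x, c x /\ x <> y.
  apply: contrapT => H; suff: open [set y] by apply: nI.
  have -> : [set y] = c; last by [].
  apply/seteqP; split => w /=.
  - move=> ->; have: z = y by apply: contrapT => zy; apply: H; exists z.
    by move=> <-.
  - by move=> cw; apply: contrapT => wy; apply: H; exists w.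
have yx : y != x by apply/eqP => e; apply: xy.
move: hT; rewrite open_hausdorff => /(_ y x yx) [[U W]] /= [yU xW] [oU oW /eqP UW].
exists (b `&` U), (c `&` W); split; [|split; [|split; [|split; [|split; [|split]]]]].
- exact: openI.
- by exists y; split => //; move: yU; rewrite inE.
- by move=> w [].
- exact: openI.
- by exists x; split => //; move: xW; rewrite inE.
- by move=> w [].
- apply/seteqP; split => w // [[_ wU] [_ wW]].
  by rewrite -UW; split.
Qed.


Definition onz (s : seq (set T)) :=
  forall i, (i < size s)%N -> open (nth set0 s i) /\ nth set0 s i !=set0.

Lemma step (v : seq (set T)) (b : set T) : open b -> b !=set0 -> onz v ->
  exists b' v', open b' /\ b' !=set0 /\ b' `<=` b /\ size v' = size v /\
   forall i, (i < size v)%N -> [/\ open (nth set0 v' i), nth set0 v' i !=set0,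
      nth set0 v' i `<=` nth set0 v i & b' `&` nth set0 v' i = set0].
Proof.
elim: v b => [|c v IH] b ob b0 hv.
  by exists b, [::]; do 4 (split => //).
have [oc c0] := hv 0%N erefl.
have [b1 [c1 [ob1 [b10 [b1b [oc1 [c10 [c1c bc1]]]]]]]] := pair_sep ob b0 oc c0.
have hv' : onz v by move=> i iv; exact: (hv i.+1).
have [b2 [v2 [ob2 [b20 [b2b [sz H]]]]]] := IH b1 ob1 b10 hv'.
exists b2, (c1 :: v2); do 3 (split => //).
  by move=> x /b2b /b1b.
split; first by rewrite /= sz.
case => [|i] /= iv.
  split => //; apply/seteqP; split => x // [/b2b xb1 xc1].
  by rewrite -bc1; split.
by apply: H.
Qed.

Definition spec (s v : seq (set T)) :=
  size v = size s /\
  (forall i, (i < size s)%N -> [/\ open (nth set0 v i), nth set0 v i !=set0 &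
      nth set0 v i `<=` nth set0 s i]) /\
  pairwise_disjoint v.

Lemma spec_ex (s : seq (set T)) : onz s -> exists v, spec s v.
Proof.
elim: s => [|b s IH] hs.
  by exists [::]; split => //; split => // i j _.
have [ob b0] := hs 0%N erefl.
have hs' : onz s by move=> i iv; exact: (hs i.+1).
have [v [sz [Hv dv]]] := IH hs'.
have hv : onz v.
  by move=> i; rewrite sz => /Hv [].
have [b' [v' [ob' [b0' [bb' [sz' H]]]]]] := step ob b0 hv.
exists (b' :: v'); split; first by rewrite /= sz' sz.
split.
  case => [|i] /=; first by [].
  move=> iv; rewrite -sz in iv; have [oi ni sub _] := H i iv.
  split => //; move=> x /sub; rewrite sz in iv; have [_ _] := Hv i iv.
  by apply.
case => [|i] [|j] //= ij; rewrite sz'.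
  by move=> jv; have [] := H j jv.
move=> jv; have [_ _ si _] := H i (ltn_trans ij jv).
have [_ _ sj _] := H j jv.
apply/seteqP; split => x // [/si xi /sj xj].
by rewrite -(dv i j ij jv); split.
Qed.

Definition refine (s : seq (set T)) : seq (set T) :=
  match pselect (exists v, spec s v) with
  | left p => projT1 (cid p)
  | right _ => [::]
  end.

Lemma refine_disj s : pairwise_disjoint (refine s).
Proof.
rewrite /refine; destruct (pselect (exists v, spec s v)) as [p|np]; last by move=> i j.
destruct (cid p) as [v Hv]; exact: Hv.2.2.
Qed.

Lemma refine_spec s : onz s -> spec s (refine s).
Proof.
move=> /spec_ex ex; rewrite /refine; destruct (pselect (exists v, spec s v)) as [p|np]; last by [].
by destruct (cid p).
Qed.

End Aux.

Theorem lemma2p2 (T : topologicalType) :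
  hausdorff_space T -> no_isolated_points T ->
  (exists sigma : bob_strategy T, winning_strategy sigma) ->
  exists tau : bob_strategy T, winning_strategy tau /\ disjoint_moves tau.
Proof.
move=> hT nI [sigma [lsig wsig]].
pose tau : bob_strategy T := fun h => refine (sigma h).
have transfer : forall alice n, alice_legal_upto tau alice n ->
    alice_legal_upto sigma alice n.
  move=> alice; elim => [|n IH] H k.
    by rewrite leqn0 => /eqP ->; exact: (H 0%N).
  have IH' := IH (fun k kn => H k (leqW kn)).
  rewrite leq_eqVlt => /orP [/eqP -> | kn]; last exact: IH' k kn.
  have := H n.+1 (leqnn _); rewrite /= /tau.
  have bl := lsig alice n IH'.
  have hon : onz (sigma (history alice n)).
    by move=> i /bl [? ? _].
  have [sz [Hv _]] := refine_spec hT nI hon.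
  move=> [sza Ha]; split; first by rewrite sza sz.
  move=> i ia; have [oi ni sub] := Ha i ia; split => //.
  rewrite sza sz in ia; have [_ _ s2] := Hv i ia.
  by move=> x /sub /s2.
exists tau; split; last by move=> alice n _; rewrite /tau /=; apply: refine_disj.
split.
  move=> alice n H; have bl := lsig alice n (transfer alice n H).
  have hon : onz (sigma (history alice n)).
    by move=> i /bl [? ? _].
  have [sz [Hv _]] := refine_spec hT nI hon.
  move=> i; rewrite /tau sz => iv; have [h1 h2 s1] := Hv i iv.
  have [_ _ s2] := bl i iv.
  by split => // x /s1 /s2.
move=> alice Hl.
have Hs : forall n, alice_legal (prevB sigma alice n) (alice n).
  by move=> n; exact: (transfer alice n (fun k _ => Hl k) n (leqnn n)).
have [x Hx] := wsig alice Hs.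
exists x => n _.
have [i [iv xi]] := Hx n.+1 I.
have bl := lsig alice n.+1 (fun k _ => Hs k).
have [_ _ s2] := bl i iv.
have [j [jv xj]] := s2 x xi.
have [sza Ha] := Hl n.+1.
have [_ _ s3] := Ha j jv.
exists j; split; first by rewrite -sza.
exact: s3.
Qed.
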